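(* Let $P\subset\mathbb R^d$ be a rational $d$-polytope, and let $\Delta_P$ be the decomposition of $\mathbb R^d$ into open cells determined by the arrangement $\mathcal A_P$ (defined in the context). Let $\bm u,\bm v\in\mathbb R^d$. If there is $\bm w\in\mathbb Z^d$ such that $\bm u$ and $\bm v+\bm w$ lie in the same open cell of $\Delta_P$ (i.e. $[\bm u]$ and $[\bm v]$ lie in the same cell of $\Delta_P/\mathbb Z^d$), then $\mathrm{TL}_{P,\bm u}(t)=\mathrm{TL}_{P,\bm v}(t)$ for all $t\in\mathbb Z_{\ge 0}$.
   Context: For $\bm a\in\mathbb R^d$, $b\in\mathbb R$, let $H_{\bm a,b}=\{\bm x:(\bm a,\bm x)=b\}$ and $H^{\ge}_{\bm a,b}=\{\bm x:(\bm a,\bm x)\ge b\}$, where $(\cdot,\cdot)$ is the standard inner product. A rational $d$-polytope $P\subset\mathbb R^d$ has a unique irredundant presentation $P=H^{\ge}_{\bm a_1,b_1}\cap\cdots\cap H^{\ge}_{\bm a_m,b_m}$ with each $(\bm a_i,b_i)\in\mathbb Z^{d+1}$ primitive (gcd of entries is 1); $N(P)=\{\bm a_1,\dots,\bm a_m\}$. The arrangement is $\mathcal A_P=\{H_{\bm a_i,k}: 1\le i\le m,\ k\in\mathbb Z\}$. The open cells of $\Delta_P$ are the nonempty sets $A_1\cap\cdots\cap A_m$ where each $A_i$ is either $H_{\bm a_i,k}$ or $\{\bm x: k<(\bm a_i,\bm x)<k+1\}$ for some $k\in\mathbb Z$. $[\bm v]$ denotes the image of $\bm v$ in $\mathbb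 R^d/\mathbb Z^d$; $\Delta_P/\mathbb Z^d$ is the induced cell decomposition of the torus. For a convex set $X\subset\mathbb R^d$ and $\bm v\in\mathbb R^d$, the translated lattice points enumerator is $\mathrm{TL}_{X,\bm v}(t)=\#((tX+\bm v)\cap\mathbb Z^d)$ for $t\in\mathbb Z_{\ge0}$. *)

(* Defs.v *)
From HB Require Import structures.
From mathcomp Require Import all_boot all_order all_algebra.
From mathcomp Require Import boolp classical_sets fsbigop reals.
Set Implicit Arguments. Unset Strict Implicit. Unset Printing Implicit Defensive.
Import Order.TTheory GRing.Theory Num.Theory.
Local Open Scope ring_scope.
Local Open Scope classical_set_scope.

Section Defs.
Variables (R : realType) (d m : nat).

Definition dotZ (a : 'rV[int]_d) (x : 'rV[R]_d) : R :=
  \sum_(j < d) (a ord0 j)%:~R * x ord0 j.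

Definition intvec (z : 'rV[int]_d) : 'rV[R]_d := map_mx (fun k : int => k%:~R) z.

Definition Pset (a : 'I_m -> 'rV[int]_d) (b : 'I_m -> int) : set 'rV[R]_d :=
  [set x | forall i, (b i)%:~R <= dotZ (a i) x].

Definition primitive (a : 'rV[int]_d) (b : int) : Prop :=
  foldr gcdz b [seq a ord0 j | j <- enum 'I_d] = 1.

Definition irredundant (a : 'I_m -> 'rV[int]_d) (b : 'I_m -> int) : Prop :=
  forall i, exists x : 'rV[R]_d,
    (forall j, j != i -> (b j)%:~R <= dotZ (a j) x) /\ dotZ (a i) x < (b i)%:~R.

(* P is a d-polytope: bounded, with nonempty interior in R^d *)
Definition is_dpolytope (a : 'I_m -> 'rV[int]_d) (b : 'I_m -> int) : Prop :=
  (exists M : R, forall x, Pset a b x -> forall j, `|x ord0 j| <= M) /\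
  (exists x : 'rV[R]_d, forall i, (b i)%:~R < dotZ (a i) x).

Definition cell_piece (ai : 'rV[int]_d) (k : int) (open : bool) : set 'rV[R]_d :=
  if open then [set x | k%:~R < dotZ ai x < (k + 1)%:~R]
  else [set x | dotZ ai x = k%:~R].

(* x and y lie in the same open cell A_1 /\ ... /\ A_m of Delta_P *)
Definition same_cell (a : 'I_m -> 'rV[int]_d) (x y : 'rV[R]_d) : Prop :=
  exists (k : 'I_m -> int) (o : 'I_m -> bool),
    forall i, cell_piece (a i) (k i) (o i) x /\ cell_piece (a i) (k i) (o i) y.

Definition TLset (a : 'I_m -> 'rV[int]_d) (b : 'I_m -> int) (v : 'rV[R]_d)
  (t : nat) : set 'rV[int]_d :=
  [set z | exists p, Pset a b p /\ intvec z = t%:R *: p + v].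

(* TL_{P,v}(t) = #((tP + v) /\ Z^d)  (finite since P is bounded) *)
Definition TL (a : 'I_m -> 'rV[int]_d) (b : 'I_m -> int) (v : 'rV[R]_d)
  (t : nat) : nat :=
  (\sum_(z \in TLset a b v t) 1)%N.

End Defs.

(* Main.v *)
Require Import Defs.
From HB Require Import structures.
From mathcomp Require Import all_boot all_order all_algebra.
From mathcomp Require Import boolp classical_sets fsbigop reals.
From mathcomp Require Import zify ring lra.
Import Order.TTheory GRing.Theory Num.Theory.
Local Open Scope ring_scope.
Local Open Scope classical_set_scope.
Section H.
Variables (R : realType) (d m : nat).
Implicit Types (x y : 'rV[R]_d) (ai : 'rV[int]_d).

Lemma dotZD ai x y : dotZ ai (x + y) = dotZ ai x + dotZ ai y.
Proof. rewrite /dotZ -big_split /=; apply: eq_bigr => j _; rewrite mxE mulrDr //. Qed.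

Lemma dotZZ ai c x : dotZ ai (c *: x) = c * dotZ ai x.
Proof. rewrite /dotZ mulr_sumr; apply: eq_bigr => j _; rewrite mxE; ring. Qed.

Lemma dotZN ai x : dotZ ai (- x) = - dotZ ai x.
Proof. rewrite -scaleN1r dotZZ; ring. Qed.

Lemma dotZ_int ai (z : 'rV[int]_d) : exists n : int, dotZ ai (intvec R z) = n%:~R.
Proof.
exists (\sum_(j < d) ai ord0 j * z ord0 j); rewrite /dotZ rmorph_sum.
by apply: eq_bigr => j _; rewrite /intvec mxE rmorphM.
Qed.

Lemma intvecB (z w : 'rV[int]_d) : intvec R (z - w) = intvec R z - intvec R w.
Proof. by apply/matrixP => i j; rewrite !mxE rmorphB. Qed.

Lemma intvecD (z w : 'rV[int]_d) : intvec R (z + w) = intvec R z + intvec R w.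
Proof. by apply/matrixP => i j; rewrite !mxE rmorphD. Qed.

Lemma intvec_inj (z w : 'rV[int]_d) : intvec R z = intvec R w -> z = w.
Proof.
move=> /matrixP H; apply/matrixP => i j; have := H i j; rewrite !mxE.
by move/eqP; rewrite eqr_int => /eqP.
Qed.

Lemma cell_ceil ai k o x y (n : int) : cell_piece ai k o x -> cell_piece ai k o y ->
  dotZ ai x <= n%:~R -> dotZ ai y <= n%:~R.
Proof.
case: o => /=; last by move=> -> ->.
move=> /andP[h1 h2] /andP[h3 h4] h5.
have : k%:~R < (n%:~R : R) by apply: lt_le_trans h5.
rewrite ltr_int => hk.
have : (k + 1)%:~R <= (n%:~R : R) by rewrite ler_int; lia.
move=> h6; apply/ltW; exact: lt_le_trans h4 h6.
Qed.
End H.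
Section H2.
Variables (R : realType) (d m : nat) (a : 'I_m -> 'rV[int]_d) (b : 'I_m -> int).

Lemma TLset_pos (u : 'rV[R]_d) (t : nat) z : (0 < t)%N ->
  TLset a b u t z <-> forall i, (b i)%:~R * t%:R + dotZ (a i) u <= dotZ (a i) (intvec R z).
Proof.
move=> t0; have tR : (0 : R) < t%:R by rewrite ltr0n.
split.
  move=> [p [Pp ->]] i; rewrite dotZD dotZZ lerD2r mulrC.
  by rewrite ler_pM2l //; apply: Pp.
move=> H; exists (t%:R^-1 *: (intvec R z - u)); split.
  move=> i; rewrite /= dotZZ dotZD dotZN.
  rewrite ler_pdivlMl // ; have := H i; lra.
by rewrite scalerA mulfV ?gt_eqF // scale1r subrK.
Qed.

Lemma same_cell_le (x y : 'rV[R]_d) i (n : int) : same_cell a x y ->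
  dotZ (a i) x <= n%:~R -> dotZ (a i) y <= n%:~R.
Proof. move=> [k [o H]]; have [h1 h2] := H i; exact: cell_ceil h1 h2. Qed.

Lemma same_cell_sym (x y : 'rV[R]_d) : same_cell a x y -> same_cell a y x.
Proof. by move=> [k [o H]]; exists k, o => i; have [? ?] := H i. Qed.

Lemma TLset_same (x y : 'rV[R]_d) t : (0 < t)%N -> same_cell a x y ->
  forall z, TLset a b x t z -> TLset a b y t z.
Proof.
move=> t0 sc z /(TLset_pos _ _ _ t0) H; apply/(TLset_pos _ _ _ t0) => i.
have [n hn] := @dotZ_int R d (a i) z.
have : dotZ (a i) x <= (n - b i * t%:Z)%:~R.
  by rewrite rmorphB rmorphM /= -hn; have := H i; rewrite -[(t%:Z)%:~R]/(t%:R : R); lra.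
move/(same_cell_le _ _ _ _ sc); rewrite rmorphB rmorphM /= -hn -[(t%:Z)%:~R]/(t%:R : R); lra.
Qed.

Lemma TLset_shift (v : 'rV[R]_d) (w : 'rV[int]_d) t :
  TLset a b (v + intvec R w) t = (fun z => z + w) @` TLset a b v t.
Proof.
apply/seteqP; split => z /=.
  move=> [p [Pp hz]]; exists (z - w); last by rewrite subrK.
  by exists p; split => //; rewrite intvecB hz addrA addrK.
move=> [z' [p [Pp hz]] <-]; exists p; split => //.
by rewrite intvecD hz addrA.
Qed.
End H2.
Section H3.
Variables (R : realType) (d m : nat) (a : 'I_m -> 'rV[int]_d) (b : 'I_m -> int).

Lemma span_zero (y : 'rV[R]_d) : is_dpolytope R a b ->
  (forall i, dotZ (a i) y = 0) -> y = 0.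
Proof.
move=> [[M HM] [x0 Hx0]] Hy; apply/rowP => j; rewrite mxE.
apply/eqP; apply/negPn/negP => yj.
pose s := (M + `|x0 ord0 j| + 1) / y ord0 j.
have : Pset a b (x0 + s *: y).
  by move=> i; rewrite dotZD dotZZ Hy mulr0 addr0; apply/ltW/Hx0.
move/HM => /(_ j); rewrite !mxE /s divfK //.
have h1 := ler_norm (- x0 ord0 j); rewrite normrN in h1.
have h2 := ler_norm (x0 ord0 j + (M + `|x0 ord0 j| + 1)).
lra.
Qed.

Lemma integral_same (x y : 'rV[R]_d) (z : 'rV[int]_d) : is_dpolytope R a b ->
  same_cell a x y -> intvec R z = x -> y = x.
Proof.
move=> hP [k [o H]] hz; apply/eqP; rewrite -subr_eq0; apply/eqP.
apply: (span_zero _ hP) => i; rewrite dotZD dotZN.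
have [n hn] := @dotZ_int R d (a i) z; rewrite hz in hn.
have [h1 h2] := H i; move: h1 h2; case: (o i) => /=.
  move=> /andP[]; rewrite hn !ltr_int => p1 p2; lia.
by move=> -> ->; rewrite subrr.
Qed.

Lemma TLset_zero (x y : 'rV[R]_d) : is_dpolytope R a b -> same_cell a x y ->
  forall z, TLset a b x 0 z -> TLset a b y 0 z.
Proof.
move=> hP sc z [p [Pp hz]]; rewrite scale0r add0r in hz.
rewrite (integral_same _ _ _ hP sc hz); exists p; split => //.
by rewrite scale0r add0r.
Qed.
End H3.

Theorem theorem1p2 (R : realType) (d m : nat)
  (a : 'I_m -> 'rV[int]_d) (b : 'I_m -> int) :
  (forall i, primitive (a i) (b i)) ->
  irredundant R a b ->
  is_dpolytope R a b ->
  forall u v : 'rV[R]_d,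
    (exists w : 'rV[int]_d, same_cell a u (v + intvec R w)) ->
    forall t : nat, TL a b u t = TL a b v t.
Proof.
move=> _ _ hP u v [w sc] t.
have E : TLset a b u t = TLset a b (v + intvec R w) t.
  have sc' := @same_cell_sym R d m a _ _ sc.
  apply/seteqP; split => z; case: t => [|t].
  - exact: (@TLset_zero R d m a b _ _ hP sc z).
  - exact: (@TLset_same R d m a b _ _ _ (ltn0Sn t) sc z).
  - exact: (@TLset_zero R d m a b _ _ hP sc' z).
  - exact: (@TLset_same R d m a b _ _ _ (ltn0Sn t) sc' z).
rewrite /TL E TLset_shift fsbig_image //.
by move=> z1 z2 _ _ /addIr.
Qed.
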